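(* For every positive integer $k$: the game $\mathcal{P}_D^{[12^k]}$ can be won perfectly by communicating $2k$ $SEP$-bits, i.e. a system $(\mathbb{C}^2\otimes_{\min}\mathbb{C}^2)^{\otimes_{\min}k}$ (indeed the $12^k$ product states $i_1\otimes\cdots\otimes i_k$, with each $i_t$ ranging over the twelve two-qubit states $\{|\kappa\kappa\rangle,|\kappa\bar\kappa\rangle,|\bar\kappa\kappa\rangle,|\bar\kappa\bar\kappa\rangle\}_{\kappa\in\{x,y,z\}}$, are pairwise distinguishable there), whereas under quantum composition perfect winning requires $2k+\lceil k\log_2 3\rceil$ qubits.
   Context: $(\mathbb{C}^2\otimes_{\min}\mathbb{C}^2)^{\otimes_{\min}k}$ denotes the $SEP$ (minimal tensor product) composition of $2k$ qubits: states are the fully separable density operators on $(\mathbb{C}^2)^{\otimes 2k}$ (convex combinations of tensor products of single-qubit density operators), and a measurement is a finite family of Hermitian operators $\{E_i\}$ summing to the identity with $\operatorname{Tr}(E_iX)\ge0$ for every fully separable positive operator $X$. Under quantum composition, $m$ qubits form the quantum system on $(\mathbb{C}^2)^{\otimes m}$ with density operators and POVMs. $|\kappa\rangle$ ($|\bar\kappa\rangle$) is the $+1$ ($-1$) eigenvector of the Pauli operator $\sigma_\kappa$, and $|\alpha\beta\rangle=|\alpha\rangle\otimes|\beta\rangle$. A set of states is pairwise distinguishable if each pair $\omega_i\ne\omega_j$ can be perfectly discriminated by some two-outcome measurement. The game $\mathcal{P}_D^{[n]}$: a referee gives Alice a message $\eta$ from a set $\mathcal{N}$, $|\mathcal{N}|=n$,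 and asks Bob whether Alice's message was $\eta$ or $\eta'$ for some $\eta'\neq\eta$; Alice and Bob share no correlations, Alice encodes $\eta$ into a state and sends it to Bob, who for each unordered pair $\{\eta,\eta'\}$ performs a measurement whose outcome is his answer; perfect winning means Bob answers correctly with probability $1$ for every $\eta$ and every $\eta'\neq\eta$. *)

(* Defs.v *)
From mathcomp Require Import all_boot all_order all_algebra.
From mathcomp Require Import reals exp.
From mathcomp.real_closed Require Export complex.
Set Implicit Arguments. Unset Strict Implicit. Unset Printing Implicit Defensive.
Import Order.TTheory GRing.Theory Num.Theory.
Local Open Scope ring_scope.

(* Operators on a finite-dimensional Hilbert space C^T (T a finite basis),
   represented by their matrix entries. *)
Definition op (C : numClosedFieldType) (T : finType) := T -> T -> C.

Section Operators.
Variables (C : numClosedFieldType) (T : finType).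

Definition opid : op C T := fun i j => (i == j)%:R.
Definition opmul (A B : op C T) : op C T := fun i j => \sum_l A i l * B l j.
Definition optr (A : op C T) : C := \sum_i A i i.
Definition hermitian (A : op C T) : Prop := forall i j, A j i = (A i j)^*.
Definition psd (A : op C T) : Prop :=
  hermitian A /\ forall v : T -> C, 0 <= \sum_i \sum_j (v i)^* * A i j * v j.
Definition density (A : op C T) : Prop := psd A /\ optr A = 1.

Definition two_outcome_meas (eff : op C T -> Prop) (E F : op C T) : Prop :=
  [/\ eff E, eff F & forall i j, E i j + F i j = opid i j].

Definition pairwise_distinguishable (eff : op C T -> Prop) (I : Type)
    (w : I -> op C T) : Prop :=
  forall i j, w i <> w j ->
    exists E F, [/\ two_outcome_meas eff E F, optr (opmul E (w i)) = 1
                  & optr (opmul F (w j)) = 1].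

(* Alice encodes eta into the state
   [enc eta] (satisfying [isState]); for the unordered pair {eta, eta'} Bob
   performs the two-outcome measurement {M eta eta', M eta' eta}, where the
   effect [M eta eta'] means "the message was eta". *)
Definition wins_PD_perfectly (isState eff : op C T -> Prop) (n : nat) : Prop :=
  exists enc : 'I_n -> op C T, (forall eta, isState (enc eta)) /\
  exists M : 'I_n -> 'I_n -> op C T,
    forall eta eta', eta != eta' ->
      two_outcome_meas eff (M eta eta') (M eta' eta) /\
      optr (opmul (M eta eta') (enc eta)) = 1.

End Operators.

(* Quantum composition: the effects are the positive semidefinite operators
   (POVM elements) and the states are the density operators. *)

(* Systems of qubits labelled by a finite type Q: computational basis of
   (C^2)^{\otimes Q}. *)
Definition qbasis (Q : finType) := {ffun Q -> 'I_2}.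

Section Qubits.
Variables (C : numClosedFieldType) (Q : finType).

Definition tensor (rho : Q -> op C 'I_2) : op C (qbasis Q) :=
  fun a b => \prod_(q : Q) rho q (a q) (b q).

Definition sep_positive (X : op C (qbasis Q)) : Prop :=
  exists (r : nat) (P : 'I_r -> Q -> op C 'I_2),
    (forall i q, psd (P i q)) /\
    forall a b, X a b = \sum_(i < r) tensor (P i) a b.

(* SEP (minimal tensor product) states: fully separable density operators *)
Definition sep_state (X : op C (qbasis Q)) : Prop :=
  exists (r : nat) (p : 'I_r -> C) (rho : 'I_r -> Q -> op C 'I_2),
    [/\ forall i, 0 <= p i, \sum_(i < r) p i = 1,
        forall i q, density (rho i q)
      & forall a b, X a b = \sum_(i < r) p i * tensor (rho i) a b].

Definition sep_effect (E : op C (qbasis Q)) : Prop :=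
  hermitian E /\ forall X, sep_positive X -> 0 <= optr (opmul E X).

End Qubits.

Section Twelve.
Variable C : numClosedFieldType.

(* kappa : 'I_3 encodes x (0), y (1), z (2); bar = false gives |kappa>, the
   +1 eigenvector of sigma_kappa, bar = true gives |bar kappa>, the -1
   eigenvector. *)
Definition pauli (kappa : 'I_3) : 'M[C]_2 :=
  if val kappa == 0%N then \matrix_(i < 2, j < 2) (i != j)%:R
  else if val kappa == 1%N then
    \matrix_(i < 2, j < 2)
      (if (val i == 0%N) && (val j == 1%N) then - 'i
       else if (val i == 1%N) && (val j == 0%N) then 'i else 0)
  else \matrix_(i < 2, j < 2) (if i == j then (if val i == 0%N then 1 else -1) else 0).

Definition ket (kappa : 'I_3) (bar : bool) : 'I_2 -> C :=
  fun i =>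
  let s : C := if bar then -1 else 1 in
  if val kappa == 0%N then (if val i == 0%N then 1 else s) / sqrtC 2
  else if val kappa == 1%N then (if val i == 0%N then 1 else s * 'i) / sqrtC 2
  else if val i == 0%N then (~~ bar)%:R else bar%:R.

Definition proj (v : 'I_2 -> C) : op C 'I_2 := fun i j => v i * (v j)^*.

(* the twelve two-qubit states |kappa kappa>, |kappa bar kappa>,
   |bar kappa kappa>, |bar kappa bar kappa> are indexed by
   (kappa, bar1, bar2) : 'I_3 * bool * bool.  The k-fold product state
   i_1 (x) ... (x) i_k lives on the 2k qubits labelled by 'I_k * 'I_2
   (qubits (t,0),(t,1) form the t-th SEP-bit C^2 (x)_min C^2). *)
Definition twelve_state (k : nat) (a : {ffun 'I_k -> 'I_3 * bool * bool})
  : op C (qbasis ('I_k * 'I_2)%type) :=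
  tensor (fun q : 'I_k * 'I_2 =>
    let: (kappa, b1, b2) := a q.1 in
    proj (ket kappa (if val q.2 == 0%N then b1 else b2))).

End Twelve.

(* Main.v *)
Require Import Defs.
From mathcomp Require Import all_boot all_order all_algebra.
From mathcomp Require Import reals exp.
From mathcomp.real_closed Require Import complex.
From mathcomp.algebra_tactics Require Import ring lra.
From mathcomp Require Import zify.
From Stdlib Require Import FunctionalExtensionality ClassicalEpsilon Classical.
Set Implicit Arguments. Unset Strict Implicit. Unset Printing Implicit Defensive.
Import Order.TTheory GRing.Theory Num.Theory.
Local Open Scope ring_scope.

Section Gen.
Variable C : numClosedFieldType.

Lemma tensor_tr (Q : finType) (F P : Q -> op C 'I_2) :
  optr (opmul (tensor F) (tensor P)) = \prod_q optr (opmul (F q) (P q)).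
Proof.
rewrite /optr /opmul /tensor.
transitivity (\sum_(a : qbasis Q) \prod_q \sum_(j < 2) F q (a q) j * P q j (a q)).
  apply: eq_bigr => a _.
  rewrite bigA_distr_bigA. apply: eq_bigr => b _. by rewrite -big_split.
by rewrite bigA_distr_bigA.
Qed.

Lemma opid_tensor (Q : finType) :
  @opid C (qbasis Q) = tensor (fun _ => @opid C _).
Proof.
apply: functional_extensionality => a; apply: functional_extensionality => b; rewrite /opid /tensor.
have [->|neq] := eqVneq a b.
  by rewrite big1 // => q _; rewrite eqxx.
have [q hq] : exists q, a q != b q.
  apply/existsP; rewrite -negb_forall; apply: contra neq => /forallP h.
  by apply/eqP/ffunP => q; apply/eqP.
by rewrite (bigD1 q) //= (negPf hq) mul0r.
Qed.

End Gen.

Section Gen.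
Variable C : numClosedFieldType.

Definition o0 : 'I_2 := @Ordinal 2 0 isT.
Definition o1 : 'I_2 := @Ordinal 2 1 isT.

Lemma sum2 (F : 'I_2 -> C) : \sum_(i < 2) F i = F o0 + F o1.
Proof. rewrite big_ord_recl big_ord_recl big_ord0 addr0 /=; congr (F _ + F _); exact/val_inj. Qed.

Lemma ord2P (i : 'I_2) : i = o0 \/ i = o1.
Proof. by case: i => [[|[|n]] h] //; [left|right]; apply/val_inj. Qed.

Lemma optr_lin3 (T : finType) (c1 c2 c3 : C) (X Y Z P : op C T) :
  optr (opmul (fun a b => c1 * X a b + c2 * Y a b + c3 * Z a b) P) =
  c1 * optr (opmul X P) + c2 * optr (opmul Y P) + c3 * optr (opmul Z P).
Proof.
rewrite /optr /opmul !mulr_sumr -!big_split /=. apply: eq_bigr => i _.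
rewrite !mulr_sumr -!big_split /=. apply: eq_bigr => j _.
by rewrite !mulrDl !mulrA.
Qed.

Lemma optr_sumr (T : finType) (r : nat) (E : op C T) (X : op C T) (P : 'I_r -> op C T) :
  (forall a b, X a b = \sum_(i < r) P i a b) ->
  optr (opmul E X) = \sum_(i < r) optr (opmul E (P i)).
Proof.
move=> hX; rewrite /optr /opmul; symmetry; rewrite exchange_big /=; apply: eq_bigr => a _.
rewrite exchange_big /=; apply: eq_bigr => b _.
by rewrite hX mulr_sumr.
Qed.

Lemma optr_id (T : finType) (P : op C T) : optr (opmul (@opid C T) P) = optr P.
Proof.
rewrite /optr /opmul; apply: eq_bigr => a _.
rewrite (bigD1 a) //= big1 ?addr0 /opid ?eqxx ?mul1r // => b hb.
by rewrite eq_sym (negPf hb) mul0r.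
Qed.

Definition locF (k : nat) (t : 'I_k) (A B : op C 'I_2) : 'I_k * 'I_2 -> op C 'I_2 :=
  fun q => if q.1 == t then (if q.2 == o0 then A else B) else @opid C _.

Lemma prod_split (k : nat) (t : 'I_k) (G : 'I_k * 'I_2 -> C) :
  \prod_q G q = G (t, o0) * G (t, o1) * \prod_(q | q.1 != t) G q.
Proof.
rewrite (bigID (fun q : 'I_k * 'I_2 => q.1 == t)) /=; congr (_ * _).
rewrite (bigD1 (t, o0)) ?eqxx //= (bigD1 (t, o1)) ?eqxx //=; last first.
  by rewrite xpair_eqE negb_and orbC.
rewrite big1 ?mulr1 ?mulrA // => -[i j] /= /andP [/andP [/eqP -> h0] h1].
by case: (ord2P j) h0 h1 => ->; rewrite eqxx.
Qed.

Lemma tr_loc (k : nat) (t : 'I_k) (A B : op C 'I_2) (P : 'I_k * 'I_2 -> op C 'I_2) :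
  optr (opmul (tensor (locF t A B)) (tensor P)) =
  optr (opmul A (P (t, o0))) * optr (opmul B (P (t, o1))) *
  \prod_(q | q.1 != t) optr (P q).
Proof.
rewrite tensor_tr (prod_split t) /locF /= eqxx /=.
congr (_ * _ * _); apply: eq_bigr => q /negPf -> ; exact: optr_id.
Qed.

End Gen.

Section Cx.
Variable R : rcfType.
Local Notation C := (R[i]).

Lemma cmulE (a b c d : R) : (Complex a b : C) * Complex c d = Complex (a*c - b*d) (a*d + b*c).
Proof. by []. Qed.
Lemma caddE (a b c d : R) : (Complex a b : C) + Complex c d = Complex (a+c) (b+d).
Proof. by []. Qed.
Lemma cconjE (a b : R) : ((Complex a b : C)^*)%R = Complex a (-b).
Proof. by []. Qed.
Lemma cleE (a b c d : R) : ((Complex a b : C) <= Complex c d) = (d == b) && (a <= c).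
Proof. by rewrite lecE. Qed.

Lemma psd_form (P : op C 'I_2) (a a' d d' u v p q : R) :
  psd P -> P o0 o0 = Complex a a' -> P o1 o1 = Complex d d' ->
  P o0 o1 = Complex u v -> P o1 o0 = Complex p q ->
  forall x0 y0 x1 y1 : R,
  0 <= (x0 * (a * x0 - a' * y0) + y0 * (a * y0 + a' * x0)) +
       (x0 * (u * x1 - v * y1) + y0 * (u * y1 + v * x1)) +
       (x1 * (p * x0 - q * y0) + y1 * (p * y0 + q * x0)) +
       (x1 * (d * x1 - d' * y1) + y1 * (d * y1 + d' * x1)).
Proof.
move=> [_ pos] h00 h11 h01 h10 x0 y0 x1 y1.
have := pos (fun i => if val i == 0%N then Complex x0 y0 else Complex x1 y1).
rewrite !sum2 /= h00 h11 h01 h10 !cconjE !cmulE !caddE cleE => /andP [_].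
move=> h; lra.
Qed.


Lemma psd2 (P : op C 'I_2) : psd P -> exists a d u v : R,
  [/\ P o0 o0 = Complex a 0, P o1 o1 = Complex d 0, P o0 o1 = Complex u v,
      P o1 o0 = Complex u (- v) & [/\ 0 <= a, 0 <= d & u ^+ 2 + v ^+ 2 <= a * d]].
Proof.
move=> hP; have [herm _] := hP.
case E00: (P o0 o0) => [a a']; case E11: (P o1 o1) => [d d'].
case E01: (P o0 o1) => [u v]; case E10: (P o1 o0) => [p q].
have := herm o0 o0; rewrite E00 cconjE => -[ha].
have := herm o1 o1; rewrite E11 cconjE => -[hd].
have := herm o1 o0; rewrite E01 E10 cconjE => -[hu hv].
have a'0 : a' = 0 by lra.
have d'0 : d' = 0 by lra.
subst a' d' u v.
have F := psd_form hP E00 E11 E01 E10.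
exists a, d, p, (-q); rewrite opprK; split => //.
have Ha := F 1 0 0 0; have Hd := F 0 0 1 0.
have H1 := F d 0 (- p) (- q).
have H2 := F (- p) q a 0.
have H3 := F 1 0 (- p) (- q).
split; [nra|nra|].
have ga : 0 <= a by nra.
have gd : 0 <= d by nra.
have [d0|dpos] := eqVneq d 0.
  subst d.
  have [a0|apos] := eqVneq a 0.
    subst a; nra.
  have apos' : 0 < a by rewrite lt_def apos.
  nra.
have dpos' : 0 < d by rewrite lt_def dpos.
nra.
Qed.

End Cx.

Section Sig.
Variable C : numClosedFieldType.

Definition sgn (b : bool) : C := if b then -1 else 1.
Definition sig (kap : 'I_3) : op C 'I_2 := fun i j =>
  if val kap == 0%N then (if val i == val j then 0 else 1)
  else if val kap == 1%N then
    (if (val i == 0%N) && (val j == 1%N) then - 'i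
     else if (val i == 1%N) && (val j == 0%N) then 'i else 0)
  else (if val i == val j then (if val i == 0%N then 1 else -1) else 0).
Definition sA (b : bool) (kap : 'I_3) : op C 'I_2 := fun i j => sgn b * sig kap i j.
Definition zop : op C 'I_2 := fun _ _ => 0.

Lemma tr2 (A P : op C 'I_2) : optr (opmul A P) =
  A o0 o0 * P o0 o0 + A o0 o1 * P o1 o0 + A o1 o0 * P o0 o1 + A o1 o1 * P o1 o1.
Proof. by rewrite /optr /opmul !sum2 !addrA. Qed.

Lemma tr_scale (T : finType) (c : C) (A P : op C T) :
  optr (opmul (fun i j => c * A i j) P) = c * optr (opmul A P).
Proof.
rewrite /optr /opmul mulr_sumr; apply: eq_bigr => i _.
by rewrite mulr_sumr; apply: eq_bigr => j _; rewrite mulrA.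
Qed.

Lemma tr_zop (P : op C 'I_2) : optr (opmul zop P) = 0.
Proof. by rewrite tr2 /zop !mul0r !addr0. Qed.

Lemma ord3P (i : 'I_3) : [\/ i = @Ordinal 3 0 isT, i = @Ordinal 3 1 isT | i = @Ordinal 3 2 isT].
Proof.
by case: i => [[|[|[|n]]] h] //; [apply: Or31|apply: Or32|apply: Or33]; apply/val_inj.
Qed.

End Sig.

Section Good.
Variable R : rcfType.
Local Notation C := (R[i]).

Definition good (A1 A2 : op C 'I_2) := forall P, psd P -> exists T x1 x2 : R,
  [/\ optr P = Complex T 0, optr (opmul A1 P) = Complex x1 0,
      optr (opmul A2 P) = Complex x2 0, 0 <= T & x1 ^+ 2 + x2 ^+ 2 <= T ^+ 2].

Definition sgnR (b : bool) : R := if b then -1 else 1.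

Lemma sgnE b : sgn C b = Complex (sgnR b) 0.
Proof. by case: b => //=; apply/eqP; rewrite eq_complex /= oppr0 !eqxx. Qed.

Definition bl (a d u v : R) (kap : 'I_3) : R :=
  if val kap == 0%N then 2 * u else if val kap == 1%N then - (2 * v) else a - d.

Lemma tr_sig (P : op C 'I_2) (a d u v : R) :
  P o0 o0 = Complex a 0 -> P o1 o1 = Complex d 0 -> P o0 o1 = Complex u v ->
  P o1 o0 = Complex u (- v) ->
  forall kap, optr (opmul (sig C kap) P) = Complex (bl a d u v kap) 0.
Proof.
move=> h00 h11 h01 h10 kap; rewrite tr2 h00 h11 h01 h10 /sig /bl /=.
case: (ord3P kap) => -> /=; rewrite ?mul0r ?mul1r ?add0r ?addr0;
  apply/eqP; rewrite eq_complex /=; apply/andP; split; apply/eqP; ring.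
Qed.

Lemma tr_P (P : op C 'I_2) (a d : R) :
  P o0 o0 = Complex a 0 -> P o1 o1 = Complex d 0 -> optr P = Complex (a + d) 0.
Proof.
move=> h00 h11; rewrite /optr sum2 h00 h11.
by apply/eqP; rewrite eq_complex /= addr0 !eqxx.
Qed.

Lemma bl_bound (a d u v : R) kap kap' : kap != kap' -> 0 <= a -> 0 <= d ->
  u ^+ 2 + v ^+ 2 <= a * d -> bl a d u v kap ^+ 2 + bl a d u v kap' ^+ 2 <= (a + d) ^+ 2.
Proof.
move=> hk ha hd h; rewrite /bl; have := sqr_ge0 (a - d).
by case: (ord3P kap) hk => ->; case: (ord3P kap') => -> //= _; nra.
Qed.

Lemma bl_bound1 (a d u v : R) kap : 0 <= a -> 0 <= d ->
  u ^+ 2 + v ^+ 2 <= a * d -> bl a d u v kap ^+ 2 <= (a + d) ^+ 2.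
Proof.
move=> ha hd h; rewrite /bl; have := sqr_ge0 (a - d).
by case: (ord3P kap) => -> /=; nra.
Qed.

Lemma tr_sA b kap (P : op C 'I_2) : optr (opmul (sA C b kap) P) = sgn C b * optr (opmul (sig C kap) P).
Proof. exact: tr_scale. Qed.

Lemma good_sig2 b b' kap kap' : kap != kap' -> good (sA C b kap) (sA C b' kap').
Proof.
move=> hk P hP; have [a [d [u [v [h00 h11 h01 h10 [ha hd huv]]]]]] := psd2 hP.
exists (a + d), (sgnR b * bl a d u v kap), (sgnR b' * bl a d u v kap').
rewrite (tr_P h00 h11) !tr_sA !(tr_sig h00 h11 h01 h10) !sgnE !cmulE.
split; [by []|by rewrite !mulr0 !mul0r subr0 addr0|by rewrite !mulr0 !mul0r subr0 addr0| by lra|].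
have := bl_bound hk ha hd huv.
by case: b; case: b' => /=; rewrite ?mulN1r ?mul1r ?sqrrN.
Qed.

Lemma good_sig1 b kap : good (sA C b kap) (zop C).
Proof.
move=> P hP; have [a [d [u [v [h00 h11 h01 h10 [ha hd huv]]]]]] := psd2 hP.
exists (a + d), (sgnR b * bl a d u v kap), 0.
rewrite (tr_P h00 h11) !tr_sA !(tr_sig h00 h11 h01 h10) tr_zop !sgnE !cmulE.
split; [by []|by rewrite !mulr0 !mul0r subr0 addr0|by []| by lra|].
have := bl_bound1 kap ha hd huv.
by case: b => /=; rewrite ?mulN1r ?mul1r ?sqrrN expr0n /= addr0.
Qed.

Lemma good_id : good (@opid C _) (zop C).
Proof.
move=> P hP; have [a [d [u [v [h00 h11 h01 h10 [ha hd huv]]]]]] := psd2 hP.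
exists (a + d), (a + d), 0.
rewrite optr_id (tr_P h00 h11) tr_zop.
split => //; [lra|]. by rewrite expr0n /= addr0.
Qed.

Lemma good_comb A1 A2 B1 B2 (P Q : op C 'I_2) (s : R) :
  good A1 A2 -> good B1 B2 -> psd P -> psd Q -> s ^+ 2 = 1 ->
  0 <= optr P * optr Q + Complex s 0 *
     (optr (opmul A1 P) * optr (opmul B1 Q) - optr (opmul A2 P) * optr (opmul B2 Q)).
Proof.
move=> gA gB hP hQ hs.
have [T [x1 [x2 [eT e1 e2 hT hx]]]] := gA P hP.
have [U [y1 [y2 [eU f1 f2 hU hy]]]] := gB Q hQ.
rewrite eT e1 e2 eU f1 f2.
have cm : forall a b : R, Complex a 0 * Complex b 0 = Complex (a * b) 0 :> C.
  by move=> a b; rewrite cmulE !mulr0 !mul0r subr0 addr0.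
have cs : forall a b : R, Complex a 0 - Complex b 0 = Complex (a - b) 0 :> C.
  by move=> a b; apply/eqP; rewrite eq_complex /= subr0 !eqxx.
rewrite !cm cs cm caddE cleE addr0 eqxx /=.
set z := x1 * y1 - x2 * y2.
have hz : z ^+ 2 <= (T * U) ^+ 2.
  have h1 : z ^+ 2 <= (x1 ^+ 2 + x2 ^+ 2) * (y1 ^+ 2 + y2 ^+ 2).
    by have := sqr_ge0 (x1 * y2 + x2 * y1); rewrite /z; nra.
  apply: le_trans h1 _; rewrite exprMn; apply: ler_pM; nra.
have hTU : 0 <= T * U by nra.
nra.
Qed.

End Good.

Section Kets.
Variable C : numClosedFieldType.

Lemma s2_ge0 : 0 <= sqrtC (2 : C).
Proof. by rewrite sqrtC_ge0 ler0n. Qed.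

Lemma s2_neq0 : sqrtC (2 : C) != 0.
Proof. by rewrite sqrtC_eq0 pnatr_eq0. Qed.

Lemma cw : ((sqrtC (2 : C))^-1)^* = (sqrtC 2)^-1.
Proof. by rewrite fmorphV /= conj_Creal // ger0_real // s2_ge0. Qed.

Lemma hw : 2 * ((sqrtC (2 : C))^-1 * (sqrtC 2)^-1) = 1.
Proof. by rewrite -invfM -expr2 sqrtCK divff // pnatr_eq0. Qed.

Lemma hi : 'i * 'i = -1 :> C.
Proof. by rewrite -expr2 sqrCi. Qed.

Lemma tr_ket (kap kap' : 'I_3) (b : bool) :
  optr (opmul (sig C kap') (proj (ket C kap b))) = if kap' == kap then sgn C b else 0.
Proof.
have W := hw; have I := hi.
rewrite tr2 /proj /ket /sig /sgn.
case: (ord3P kap) => ->; case: (ord3P kap') => ->; case: b => /=;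
  rewrite ?rmorphM ?rmorphN ?rmorph1 ?rmorph0 /=; rewrite ?conjCi; rewrite ?cw. all: first [ring: W I | (transitivity (- (2 * ((sqrtC (2:C))^-1 * (sqrtC 2)^-1))); [ring | by rewrite W])].
Qed.

Lemma trace_ket (kap : 'I_3) (b : bool) : optr (proj (ket C kap b)) = 1.
Proof.
have W := hw; have I := hi.
rewrite /optr sum2 /proj /ket.
case: (ord3P kap) => ->; case: b => /=;
  rewrite ?rmorphM ?rmorphN ?rmorph1 ?rmorph0 /=; rewrite ?conjCi; rewrite ?cw; ring: W I.
Qed.

End Kets.

Section Herm.
Variable C : numClosedFieldType.

Lemma herm_tensor (Q : finType) (F : Q -> op C 'I_2) :
  (forall q, Defs.hermitian (F q)) -> Defs.hermitian (tensor F).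
Proof.
move=> h a b; rewrite /tensor rmorph_prod; apply: eq_bigr => q _; exact: h.
Qed.

Lemma herm_id (T : finType) : Defs.hermitian (@opid C T).
Proof. by move=> i j; rewrite /opid eq_sym conjC_nat. Qed.

Lemma herm_zop : Defs.hermitian (zop C).
Proof. by move=> i j; rewrite /zop rmorph0. Qed.

Lemma herm_sA b kap : Defs.hermitian (sA C b kap).
Proof.
move=> i j; rewrite /sA /sig /sgn.
case: (ord2P i) => ->; case: (ord2P j) => ->; case: (ord3P kap) => ->; case: b => /=;
  rewrite ?rmorphM ?rmorph0 ?rmorph1 ?rmorphN ?rmorph1 /=; rewrite ?conjCi ?opprK //.
Qed.

Lemma herm_locF k (t : 'I_k) (A B : op C 'I_2) : Defs.hermitian A -> Defs.hermitian B ->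
  forall q, Defs.hermitian (locF t A B q).
Proof.
move=> hA hB q; rewrite /locF; case: ifP => _; last exact: herm_id.
by case: ifP.
Qed.

End Herm.

Section Eff.
Variable R : rcfType.
Local Notation C := (R[i]).
Variable k : nat.
Local Notation Q := ('I_k * 'I_2)%type.

Definition Eop (t : 'I_k) (A1 B1 A2 B2 : op C 'I_2) (s : R) : op C (qbasis Q) :=
  fun a b => 2^-1 * @opid C _ a b + (Complex s 0 / 2) * tensor (locF t A1 B1) a b +
             (- (Complex s 0 / 2)) * tensor (locF t A2 B2) a b.

Lemma Eop_tr t A1 B1 A2 B2 s (P : Q -> op C 'I_2) :
  optr (opmul (Eop t A1 B1 A2 B2 s) (tensor P)) =
  2^-1 * ((optr (P (t, o0)) * optr (P (t, o1)) + Complex s 0 *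
      (optr (opmul A1 (P (t, o0))) * optr (opmul B1 (P (t, o1))) -
       optr (opmul A2 (P (t, o0))) * optr (opmul B2 (P (t, o1))))) *
   \prod_(q | q.1 != t) optr (P q)).
Proof.
rewrite /Eop optr_lin3 opid_tensor tensor_tr !tr_loc (prod_split t) !optr_id.
under eq_bigr do rewrite optr_id.
ring.
Qed.

Lemma tr_psd_ge0 (P : op C 'I_2) : psd P -> 0 <= optr P.
Proof.
move=> hP; have [a [d [u [v [h00 h11 _ _ [ha hd _]]]]]] := psd2 hP.
by rewrite (tr_P h00 h11) cleE eqxx /=; lra.
Qed.

Lemma Eop_sep t A1 B1 A2 B2 s :
  good A1 A2 -> good B1 B2 -> s ^+ 2 = 1 ->
  Defs.hermitian A1 -> Defs.hermitian B1 -> Defs.hermitian A2 -> Defs.hermitian B2 ->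
  sep_effect (Eop t A1 B1 A2 B2 s).
Proof.
move=> gA gB hs hA1 hB1 hA2 hB2; split.
  move=> a b; rewrite /Eop !rmorphD !rmorphM /= rmorphN rmorphM /=.
  have c2 : (2^-1 : C)^* = 2^-1 by rewrite fmorphV /= conjC_nat.
  have cs : (Complex s 0 : C)^* = Complex s 0 by rewrite cconjE oppr0.
  rewrite c2 cs -herm_id -(herm_tensor (herm_locF t hA1 hB1)) -(herm_tensor (herm_locF t hA2 hB2)).
  by [].
move=> X [r [P [hP hX]]].
rewrite (optr_sumr _ hX); apply: sumr_ge0 => i _.
rewrite Eop_tr; apply: mulr_ge0; first by rewrite invr_ge0 ler0n.
apply: mulr_ge0; first exact: good_comb.
by apply: prodr_ge0 => q _; apply: tr_psd_ge0.
Qed.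

Lemma Eop_compl t A1 B1 A2 B2 a b :
  Eop t A1 B1 A2 B2 1 a b + Eop t A1 B1 A2 B2 (-1) a b = @opid C _ a b.
Proof.
rewrite /Eop.
have -> : Complex (-1) 0 = - Complex 1 0 :> C by apply/eqP; rewrite eq_complex /= oppr0 !eqxx.
have h2 : (2 : C) != 0 by rewrite pnatr_eq0.
by field.
Qed.

End Eff.

Section Proj.
Variable C : numClosedFieldType.

Lemma psd_proj (v : 'I_2 -> C) : psd (proj v).
Proof.
split.
  by move=> i j; rewrite /proj rmorphM /= conjCK mulrC.
move=> w.
have -> : \sum_i \sum_j (w i)^* * proj v i j * w j =
          (\sum_i (w i)^* * v i) * (\sum_i (w i)^* * v i)^*.
  rewrite rmorph_sum /= mulr_suml; apply: eq_bigr => i _.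
  rewrite mulr_sumr; apply: eq_bigr => j _.
  by rewrite /proj rmorphM /= conjCK; ring.
exact: mul_conjC_ge0.
Qed.

Definition rho1 (x : 'I_3 * bool * bool) : op C 'I_2 :=
  let: (kap, b1, b2) := x in proj (ket C kap b1).
Definition rho2 (x : 'I_3 * bool * bool) : op C 'I_2 :=
  let: (kap, b1, b2) := x in proj (ket C kap b2).

End Proj.

Section Tw.
Variable R : rcfType.
Local Notation C := (R[i]).
Variable k : nat.

Lemma tw_factor (a : {ffun 'I_k -> 'I_3 * bool * bool}) q :
  optr ((fun q : 'I_k * 'I_2 => let: (kappa, b1, b2) := a q.1 in
    proj (ket C kappa (if val q.2 == 0%N then b1 else b2))) q) = 1.
Proof. rewrite /=; case: (a q.1) => [[kap b1] b2]; exact: trace_ket. Qed.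

Lemma tw_tr t A1 B1 A2 B2 s (a : {ffun 'I_k -> 'I_3 * bool * bool}) :
  optr (opmul (Eop t A1 B1 A2 B2 s) (twelve_state C a)) =
  2^-1 * (1 + Complex s 0 *
    (optr (opmul A1 (rho1 C (a t))) * optr (opmul B1 (rho2 C (a t))) -
     optr (opmul A2 (rho1 C (a t))) * optr (opmul B2 (rho2 C (a t))))).
Proof.
rewrite /twelve_state Eop_tr big1 ?mulr1; last by move=> q _; apply: tw_factor.
have h0 := tw_factor a (t, o0); have h1 := tw_factor a (t, o1).
move: h0 h1 => /=; rewrite /rho1 /rho2.
by case: (a t) => [[kap b1] b2] /= -> ->; rewrite mul1r.
Qed.

Lemma sgn2 (b : bool) : sgn C b * sgn C b = 1.
Proof. by case: b; rewrite /sgn ?mulrNN mulr1. Qed.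

Lemma trA (b : bool) kap kap' b0 :
  optr (opmul (sA C b kap') (proj (ket C kap b0))) =
  if kap' == kap then sgn C b * sgn C b0 else 0.
Proof. by rewrite tr_sA tr_ket; case: eqP => _; rewrite ?mulr0. Qed.

Lemma pair_witness (x y : 'I_3 * bool * bool) : x != y ->
  exists A1 B1 A2 B2 : op C 'I_2,
  [/\ good A1 A2, good B1 B2,
      [/\ Defs.hermitian A1, Defs.hermitian B1, Defs.hermitian A2 & Defs.hermitian B2],
      optr (opmul A1 (rho1 C x)) * optr (opmul B1 (rho2 C x)) -
      optr (opmul A2 (rho1 C x)) * optr (opmul B2 (rho2 C x)) = 1 &
      optr (opmul A1 (rho1 C y)) * optr (opmul B1 (rho2 C y)) -
      optr (opmul A2 (rho1 C y)) * optr (opmul B2 (rho2 C y)) = -1].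
Proof.
case: x => [[kap b1] b2]; case: y => [[kap' c1] c2] hne /=.
have [ek|nk] := eqVneq kap kap'.
  subst kap'.
  have [eb1|nb1] := eqVneq b1 c1.
    subst c1.
    have nb2 : b2 != c2 by apply: contra hne => /eqP ->.
    exists (@opid C _), (sA C b2 kap), (zop C), (zop C); split.
    - exact: good_id.
    - exact: good_sig1.
    - by split; [apply: herm_id|apply: herm_sA|apply: herm_zop|apply: herm_zop].
    - by rewrite !tr_zop !optr_id !trace_ket !trA eqxx sgn2 mul0r subr0 mul1r.
    - rewrite !tr_zop !optr_id !trace_ket !trA eqxx mul0r subr0 mul1r.
      by move: nb2; clear hne; case: b2; case: c2 => //= _; rewrite /sgn ?mulr1 ?mul1r ?mulrN1 ?mulN1r.
  exists (sA C b1 kap), (@opid C _), (zop C), (zop C); split.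
  - exact: good_sig1.
  - exact: good_id.
  - by split; [apply: herm_sA|apply: herm_id|apply: herm_zop|apply: herm_zop].
  - by rewrite !tr_zop !optr_id !trace_ket !trA eqxx sgn2 mul0r subr0 mulr1.
  - rewrite !tr_zop !optr_id !trace_ket !trA eqxx mul0r subr0 mulr1.
    by move: nb1; clear hne; case: b1; case: c1 => //= _; rewrite /sgn ?mulr1 ?mul1r ?mulrN1 ?mulN1r.
exists (sA C b1 kap), (sA C b2 kap), (sA C c1 kap'), (sA C c2 kap'); split.
- exact: good_sig2.
- exact: good_sig2.
- by split; apply: herm_sA.
- have nk' : (kap' == kap) = false by rewrite eq_sym (negPf nk).
  by rewrite !trA !eqxx ?(negPf nk) ?nk' !sgn2 mul0r subr0 mulr1.
- have nk' : (kap' == kap) = false by rewrite eq_sym (negPf nk).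
  by rewrite !trA !eqxx ?(negPf nk) ?nk' !sgn2 mul0r sub0r mulr1.
Qed.

Lemma dist_core (a b : {ffun 'I_k -> 'I_3 * bool * bool}) : a != b ->
  exists E F, [/\ two_outcome_meas (@sep_effect C _) E F,
    optr (opmul E (twelve_state C a)) = 1 & optr (opmul F (twelve_state C b)) = 1].
Proof.
move=> hab.
have [t ht] : exists t, a t != b t.
  apply/existsP; rewrite -negb_forall; apply: contra hab => /forallP h.
  by apply/eqP/ffunP => q; apply/eqP.
have [A1 [B1 [A2 [B2 [gA gB [h1 h2 h3 h4] ex ey]]]]] := pair_witness ht.
exists (Eop t A1 B1 A2 B2 1), (Eop t A1 B1 A2 B2 (-1)); split.
- split; [apply: Eop_sep => //; exact: expr1n|apply: Eop_sep => //|].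
  + by rewrite sqrrN expr1n.
  + exact: Eop_compl.
- rewrite tw_tr ex.
  have -> : Complex 1 0 = 1 :> C by [].
  by rewrite mulr1 -[1 + 1]/(2%:R) mulVf // pnatr_eq0.
- rewrite tw_tr ey.
  have -> : Complex (-1) 0 = -1 :> C by apply/eqP; rewrite eq_complex /= oppr0 !eqxx.
  by rewrite mulrNN mulr1 -[1 + 1]/(2%:R) mulVf // pnatr_eq0.
Qed.

End Tw.

Section Form.
Variable C : numClosedFieldType.
Variable T : finType.
Implicit Types (A : op C T) (u v x : T -> C).

Definition qform A u v := \sum_a \sum_b (u a)^* * A a b * v b.
Definition vadd u v : T -> C := fun a => u a + v a.
Definition vsc (c : C) u : T -> C := fun a => c * u a.
Definition ev (i : T) : T -> C := fun a => (a == i)%:R.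

Lemma formDl A u v x : qform A (vadd u v) x = qform A u x + qform A v x.
Proof.
rewrite /qform -big_split /=; apply: eq_bigr => a _.
rewrite -big_split /=; apply: eq_bigr => b _.
by rewrite /vadd rmorphD /=; ring.
Qed.

Lemma formDr A u v x : qform A x (vadd u v) = qform A x u + qform A x v.
Proof.
rewrite /qform -big_split /=; apply: eq_bigr => a _.
rewrite -big_split /=; apply: eq_bigr => b _.
by rewrite /vadd; ring.
Qed.

Lemma formZl A c u x : qform A (vsc c u) x = c^* * qform A u x.
Proof.
rewrite /qform mulr_sumr; apply: eq_bigr => a _.
rewrite mulr_sumr; apply: eq_bigr => b _.
by rewrite /vsc rmorphM /=; ring.
Qed.

Lemma formZr A c u x : qform A x (vsc c u) = c * qform A x u.
Proof.
rewrite /qform mulr_sumr; apply: eq_bigr => a _.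
rewrite mulr_sumr; apply: eq_bigr => b _.
by rewrite /vsc; ring.
Qed.

Lemma form_evl A i x : qform A (ev i) x = \sum_b A i b * x b.
Proof.
rewrite /qform (bigD1 i) //=.
rewrite [X in _ + X = _]big1 ?addr0; last first.
  move=> a /negPf hai; rewrite big1 // => b _.
  by rewrite /ev hai rmorph0 !mul0r.
by apply: eq_bigr => b _; rewrite /ev eqxx rmorph1 mul1r.
Qed.

Lemma form_evr A i x : qform A x (ev i) = \sum_a (x a)^* * A a i.
Proof.
rewrite /qform; apply: eq_bigr => a _.
rewrite (bigD1 i) //= big1 ?addr0 /ev ?eqxx ?mulr1 // => b /negPf hb.
by rewrite hb mulr0.
Qed.

Lemma form_ev2 A i : qform A (ev i) (ev i) = A i i.
Proof.
rewrite form_evl (bigD1 i) //= big1 ?addr0 /ev ?eqxx ?mulr1 // => b /negPf hb.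
by rewrite hb mulr0.
Qed.

Lemma form_herm A u v : Defs.hermitian A -> qform A u v = (qform A v u)^*.
Proof.
move=> hA; rewrite /qform rmorph_sum /= exchange_big; apply: eq_bigr => a _.
rewrite rmorph_sum /=; apply: eq_bigr => b _.
by rewrite !rmorphM /= conjCK -hA; ring.
Qed.

Lemma form_shift A x i t : Defs.hermitian A ->
  qform A (vadd x (vsc t (ev i))) (vadd x (vsc t (ev i))) =
  qform A x x + t * (qform A (ev i) x)^* + t^* * qform A (ev i) x + t^* * t * A i i.
Proof.
move=> hA.
rewrite formDl !formDr !formZl !formZr form_ev2 (form_herm x (ev i) hA).
ring.
Qed.

Lemma psd_form_ge0 A x : psd A -> 0 <= qform A x x.
Proof. by move=> [_ h]; apply: h. Qed.

End Form.

Section Kill.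
Variable R : rcfType.
Local Notation C := (R[i]).
Variable T : finType.

Lemma ge0_complex (z : C) : 0 <= z -> exists d : R, z = Complex d 0 /\ 0 <= d.
Proof.
case: z => a b; rewrite cleE => /andP [/eqP <- h]; by exists a.
Qed.

Lemma psd_kill (A : op C T) (w : T -> C) : psd A -> qform A w w = 0 ->
  forall i, \sum_b A i b * w b = 0.
Proof.
move=> hA hw0 i; have hH := hA.1.
have [d [Ed hd]] : exists d : R, A i i = Complex d 0 /\ 0 <= d.
  by apply: ge0_complex; rewrite -form_ev2; apply: psd_form_ge0.
rewrite -form_evl; case Ec: (qform A (ev C i) w) => [x y].
have key : forall s : R, 0 <= -2 * s * (x ^+ 2 + y ^+ 2) + s ^+ 2 * (x ^+ 2 + y ^+ 2) * d.
  move=> s.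
  have := psd_form_ge0 (vadd w (vsc (Complex (- s) 0 * Complex x y) (ev C i))) hA.
  rewrite form_shift // hw0 Ec Ed !cconjE !cmulE !caddE cleE => /andP [_ h].
  move: h => /=; lra.
pose s := (d + 1)^-1.
have hs1 : s * (d + 1) = 1 by rewrite /s mulVf // gt_eqF // ltr_wpDl.
have hs0 : 0 < s by rewrite /s invr_gt0 ltr_wpDl.
have := key s.
have hn : 0 <= x ^+ 2 + y ^+ 2 by nra.
move=> hk.
set n := x ^+ 2 + y ^+ 2 in hn hk.
have e : s * d = 1 - s by lra.
have e2 : s ^+ 2 * n * d = s * n * (1 - s) by rewrite -e; ring.
rewrite e2 in hk.
have hk2 : 0 <= - (n * (s * (1 + s))) by lra.
have hp : 0 < s * (1 + s) by nra.
have n0 : n = 0.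
  set p := s * (1 + s) in hk2 hp.
  have : n <= 0 by nra.
  lra.
rewrite /n in n0.
have x0 : x = 0 by nra.
have y0 : y = 0 by nra.
by rewrite x0 y0.
Qed.

End Kill.

Section Chol.
Variable R : rcfType.
Local Notation C := (R[i]).
Variable T : finType.

Lemma col_ev (A : op C T) a j : \sum_b A a b * ev C j b = A a j.
Proof.
rewrite (bigD1 j) //= big1 ?addr0 /ev ?eqxx ?mulr1 // => b /negPf hb.
by rewrite hb mulr0.
Qed.

Lemma psd_diag0 (A : op C T) i : psd A -> A i i = 0 -> forall a, A a i = 0.
Proof.
move=> hA h0 a.
have := psd_kill hA (w := ev C i); rewrite form_ev2 => /(_ h0 a).
by rewrite col_ev.
Qed.

Lemma psd_diag_ge0 (A : op C T) i : psd A -> 0 <= A i i.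
Proof. by move=> hA; rewrite -form_ev2; apply: psd_form_ge0. Qed.

Definition decomp (A : op C T) (s : seq (T -> C)) :=
  forall a b, A a b = \sum_(v <- s) v a * (v b)^*.

Lemma chol_zero (A : op C T) : psd A -> (forall j, A j j = 0) -> decomp A [::].
Proof.
move=> hA h a b; rewrite big_nil.
have /(_ b) := psd_diag0 hA (h a).
have := psd_diag0 hA (h b) a.
done.
Qed.

Lemma chol (A : op C T) : psd A -> exists s, decomp A s.
Proof.
move: A; suff: forall n (A : op C T), (#|[set j | A j j != 0%R]| <= n)%N -> psd A -> exists s, decomp A s.
  by move=> H A; apply: (H _ A (leqnn _)).
elim=> [|n IH] A hn hA.
  exists [::]; apply: chol_zero => // j.
  move: hn; rewrite leqn0 => /eqP /cards0_eq /setP /(_ j).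
  by rewrite !inE => /negbFE /eqP.
have [allz|] := boolP [forall j, A j j == 0].
  by exists [::]; apply: chol_zero => // j; apply/eqP; move/forallP: allz.
rewrite negb_forall => /existsP [j hj].
set d := A j j.
have hd0 : 0 <= d by apply: psd_diag_ge0.
have dr : d^* = d by rewrite conj_Creal // ger0_real.
pose A' : op C T := fun a b => A a b - A a j * A j b / d.
have hH := hA.1.
have hA' : psd A'.
  split.
    move=> a b; rewrite /A' rmorphB /= !rmorphM /= fmorphV /= dr -!hH.
    by rewrite [A j a * _]mulrC.
  move=> x; change (0 <= qform A' x x).
  have -> : qform A' x x =
    qform A (vadd x (vsc (- (qform A (ev C j) x) / d) (ev C j)))
           (vadd x (vsc (- (qform A (ev C j) x) / d) (ev C j))).
    rewrite form_shift //.
    rewrite rmorphM /= rmorphN fmorphV /= dr -/d.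
    have -> : qform A' x x =
      qform A x x - (qform A x (ev C j)) * qform A (ev C j) x / d.
      rewrite form_evl form_evr /qform -mulrA mulr_suml -sumrB; apply: eq_bigr => a _.
      rewrite mulr_suml mulr_sumr -sumrB; apply: eq_bigr => b _.
      by rewrite /A'; field.
    rewrite (form_herm x (ev C j) hH).
    have hd : d != 0 by [].
    by field.
  exact: psd_form_ge0.
have [s hs] : exists s, decomp A' s.
  apply: IH hA'.
  have hsub : [set i | A' i i != 0] \proper [set i | A i i != 0].
    apply/properP; split.
      apply/subsetP => i; rewrite !inE; apply: contra => /eqP hi.
      by rewrite /A' (psd_diag0 hA hi j) hi mulr0 mul0r subr0.
    exists j; first by rewrite inE.
    by rewrite inE negbK /A' -/d mulrC mulrA mulVf // mul1r subrr.
  by rewrite -ltnS; apply: leq_trans (proper_card hsub) hn.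
pose v : T -> C := fun a => A a j / sqrtC d.
exists (v :: s) => a b; rewrite big_cons -hs /A' /v.
have sr : (sqrtC d)^* = sqrtC d by rewrite conj_Creal // ger0_real // sqrtC_ge0.
have s2 : sqrtC d * sqrtC d = d by rewrite -expr2 sqrtCK.
have sn : sqrtC d != 0 by rewrite sqrtC_eq0.
rewrite rmorphM /= fmorphV /= sr -hH.
move: s2 sn sr; set q := sqrtC d => s2 sn _.
rewrite -s2; field.
by rewrite sn.
Qed.

End Chol.

Section Quant.
Variable R : rcfType.
Local Notation C := (R[i]).
Variable T : finType.


Lemma tr_decomp (A rho : op C T) s : decomp rho s ->
  optr (opmul A rho) = \sum_(v <- s) qform A v v.
Proof.
move=> hs; rewrite /optr /opmul /qform.
transitivity (\sum_a \sum_(v <- s) \sum_b (v a)^* * A a b * v b).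
  apply: eq_bigr => a _.
  transitivity (\sum_b \sum_(v <- s) (v a)^* * A a b * v b).
    apply: eq_bigr => b _.
    by rewrite hs mulr_sumr; apply: eq_bigr => v _; ring.
  by rewrite exchange_big.
by rewrite exchange_big.
Qed.

Lemma sum_ge0_eq0 (F : (T -> C) -> C) (s : seq (T -> C)) :
  (forall v, 0 <= F v) -> \sum_(v <- s) F v = 0 -> forall v, List.In v s -> F v = 0.
Proof.
move=> h0; elim: s => [|x s IH] //=; rewrite big_cons => hs v [<-|hv].
  by have /eqP := hs; rewrite paddr_eq0 // ?sumr_ge0 // => /andP [/eqP].
apply: IH hv; have /eqP := hs; rewrite paddr_eq0 // ?sumr_ge0 // => /andP [_ /eqP] //.
Qed.

Lemma sum_zero_vecs (s : seq (T -> C)) :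
  (forall v, List.In v s -> forall a, v a = 0) -> \sum_(v <- s) qform (@opid C T) v v = 0.
Proof.
elim: s => [|x s IH] h; first by rewrite big_nil.
rewrite big_cons IH ?addr0; last by move=> v hv; apply: h; right.
rewrite /qform big1 // => a _; rewrite big1 // => b _.
by rewrite (h x (or_introl erefl) a) rmorph0 !mul0r.
Qed.

Lemma dens_vec (rho : op C T) : density rho -> exists w : T -> C,
  (exists a, w a != 0) /\
  forall A, psd A -> optr (opmul A rho) = 0 -> forall i, \sum_b A i b * w b = 0.
Proof.
move=> [hpsd htr]; have [s hs] := chol hpsd.
have [[v [hv [a ha]]]|hnone] :=
  classic (exists v, List.In v s /\ exists a, v a != 0).
  exists v; split; first by exists a.
  move=> A hA h0 i; apply: psd_kill => //.
  apply: (sum_ge0_eq0 (F := fun v => qform A v v)) hv.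
    by move=> u; apply: psd_form_ge0.
  by rewrite -(tr_decomp A hs).
exfalso.
have : \sum_(v <- s) qform (@opid C T) v v = 0.
  apply: sum_zero_vecs => v hv a; apply/eqP; apply: contraT => hva.
  by exfalso; apply: hnone; exists v; split => //; exists a.
rewrite -(tr_decomp _ hs) optr_id htr => /eqP; by rewrite oner_eq0.
Qed.

End Quant.

Section Count.
Variable R : rcfType.
Local Notation C := (R[i]).
Variable T : finType.

Lemma sum_enum (F : T -> C) : \sum_a F a = \sum_(j < #|T|) F (enum_val j).
Proof.
apply: (reindex enum_val); exists enum_rank => x _; [exact: enum_valK|exact: enum_rankK].
Qed.

Lemma orth_count (N : nat) (w : 'I_N -> T -> C) :
  (forall i, exists a, w i a != 0) ->
  (forall i j, i != j -> \sum_a w i a * (w j a)^* = 0) -> (N <= #|T|)%N.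
Proof.
move=> hnz horth.
pose W : 'M[C]_(N, #|T|) := \matrix_(i, j) w i (enum_val j).
pose W2 : 'M[C]_(#|T|, N) := \matrix_(j, i) (w i (enum_val j))^*.
pose nv := \row_(i < N) \sum_a w i a * (w i a)^*.
have hG : W *m W2 = diag_mx nv.
  apply/matrixP => i j; rewrite !mxE.
  have -> : \sum_j0 W i j0 * W2 j0 j = \sum_a w i a * (w j a)^*.
    by rewrite sum_enum; apply: eq_bigr => l _; rewrite !mxE.
  have [<-|nij] := eqVneq i j; first by [].
  by rewrite horth.
have hnv : forall i, nv 0 i != 0.
  move=> i; rewrite mxE; have [a ha] := hnz i.
  apply/negP => /eqP h0.
  have hge : forall b, predT b -> 0 <= w i b * (w i b)^* by move=> b _; apply: mul_conjC_ge0.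
  have := psumr_eq0P hge h0 (i := a) isT.
  by move=> /eqP; rewrite mul_conjC_eq0 (negPf ha).
have hunit : W *m W2 \in unitmx.
  rewrite hG unitmxE det_diag unitfE; apply/prodf_neq0 => i _; exact: hnv.
have := mxrank_unit hunit => hr.
by rewrite -hr (leq_trans (mxrankM_maxl _ _)) // rank_leq_col.
Qed.

Lemma tr_sum (E F X : op C T) : (forall a b, E a b + F a b = @opid C T a b) ->
  optr (opmul E X) + optr (opmul F X) = optr X.
Proof.
move=> h; rewrite -[optr X]optr_id /optr /opmul -big_split /=; apply: eq_bigr => a _.
rewrite -big_split /=; apply: eq_bigr => b _; by rewrite -mulrDl h.
Qed.

End Count.

Section QB.
Variable R : rcfType.
Local Notation C := (R[i]).

Lemma quantum_bound (m N : nat) :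
  wins_PD_perfectly (@density C (qbasis 'I_m)) (@psd C (qbasis 'I_m)) N ->
  (N <= 2 ^ m)%N.
Proof.
move=> [enc [hst [M hM]]].
pose T := qbasis 'I_m.
have hw : forall eta, exists w : T -> C, (exists a, w a != 0) /\
  forall A, psd A -> optr (opmul A (enc eta)) = 0 -> forall i, \sum_b A i b * w b = 0.
  by move=> eta; apply: dens_vec.
pose w := fun eta => proj1_sig (constructive_indefinite_description _ (hw eta)).
have wP : forall eta, (exists a, w eta a != 0) /\
  forall A, psd A -> optr (opmul A (enc eta)) = 0 -> forall i, \sum_b A i b * w eta b = 0.
  by move=> eta; rewrite /w; case: constructive_indefinite_description.
have := @orth_count R T N w (fun i => (wP i).1).
rewrite /T card_ffun !card_ord; apply.
move=> e e' hne.
have [[p1 p2 hc] h1] := hM e e' hne.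
have hne' : e' != e by rewrite eq_sym.
have [[_ _ hc'] h2] := hM e' e hne'.
have hst1 : optr (enc e) = 1 := (hst e).2.
have hst2 : optr (enc e') = 1 := (hst e').2.
have t2 : optr (opmul (M e' e) (enc e)) = 0.
  have := tr_sum (enc e) hc; rewrite h1 hst1 => h.
  by apply: (@addrI _ 1); rewrite addr0.
have t1 : optr (opmul (M e e') (enc e')) = 0.
  have := tr_sum (enc e') hc'; rewrite h2 hst2 => h.
  by apply: (@addrI _ 1); rewrite addr0.
have k2 := (wP e).2 _ p2 t2.
have k1 := (wP e').2 _ p1 t1.
have hH := p1.1.
transitivity (\sum_a (\sum_b M e e' a b * w e b) * (w e' a)^*).
  apply: eq_bigr => a _; congr (_ * _).
  transitivity (\sum_b (M e e' a b + M e' e a b) * w e b).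
    have hc2 : forall a b, M e e' a b + M e' e a b = @opid C _ a b := hc.
    under eq_bigr => b _ do rewrite hc2.
    rewrite (bigD1 a) //= big1 ?addr0 /opid ?eqxx ?mul1r // => b /negPf hb.
    by rewrite eq_sym hb mul0r.
  by rewrite (eq_bigr _ (fun b _ => mulrDl _ _ _)) big_split /= k2 addr0.
under eq_bigr => a _ do rewrite mulr_suml.
rewrite exchange_big /=.
rewrite big1 // => b _.
transitivity (w e b * (\sum_a M e e' b a * w e' a)^*); last by rewrite k1 rmorph0 mulr0.
rewrite rmorph_sum /= mulr_sumr; apply: eq_bigr => a _.
by rewrite rmorphM /= -hH; ring.
Qed.

End QB.

Lemma log_bound (R : realType) (k m : nat) : (12 ^ k <= 2 ^ m)%N ->
  ((2 * k)%:Z + Num.ceil (k%:R * (ln (3 : R) / ln (2 : R))) <= m%:Z)%R.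
Proof.
move=> h.
have e12 : (12 ^ k = 2 ^ (2 * k) * 3 ^ k)%N by rewrite expnM -expnMn.
have h2k : (2 * k <= m)%N.
  rewrite -(@leq_exp2l 2) //; apply: leq_trans h.
  by rewrite e12 leq_pmulr // expn_gt0.
have h3 : (3 ^ k <= 2 ^ (m - 2 * k))%N.
  rewrite -(@leq_pmul2l (2 ^ (2 * k))) ?expn_gt0 // -expnD subnKC // -e12 //.
have h3R : (3 : R) ^+ k <= (2 : R) ^+ (m - 2 * k).
  by rewrite -!natrX ler_nat.
have hl2 : 0 < ln (2 : R) by apply: ln_gt0; rewrite ltr1n.
have hlog : k%:R * ln (3 : R) <= (m - 2 * k)%:R * ln (2 : R).
  rewrite !mulr_natl -!lnXn ?ltr0n //.
  by rewrite ler_ln // posrE exprn_gt0 // ltr0n.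
have hc : Num.ceil (k%:R * (ln (3 : R) / ln (2 : R))) <= (m - 2 * k)%:Z.
  rewrite ceil_le_int mulrA ler_pdivrMr //.
have -> : m%:Z = (2 * k)%:Z + (m - 2 * k)%:Z by rewrite -PoszD subnKC.
by rewrite lerD2l.
Qed.

Section Final.
Variable R : realType.
Local Notation C := (R[i]).
Variable k : nat.
Local Notation FT := {ffun 'I_k -> 'I_3 * bool * bool}.

Lemma tw_state (a : FT) : sep_state (@twelve_state C k a).
Proof.
exists 1%N, (fun _ => 1), (fun _ q => let: (kappa, b1, b2) := a q.1 in
    proj (ket C kappa (if val q.2 == 0%N then b1 else b2))); split.
- by move=> _; rewrite ler01.
- by rewrite big_ord1.
- move=> _ q; case: (a q.1) => [[kap b1] b2]; split; first exact: psd_proj.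
  exact: trace_ket.
- by move=> x y; rewrite big_ord1 mul1r.
Qed.

Lemma tw_trace (a : FT) : optr (@twelve_state C k a) = 1.
Proof.
rewrite -optr_id opid_tensor /twelve_state tensor_tr big1 // => q _.
by rewrite optr_id; apply: (@tw_factor R).
Qed.

Lemma tw_inj : injective (@twelve_state C k).
Proof.
move=> a b hab; apply/eqP; apply: contraT => hne.
have [E [F [[_ _ hEF] hE hF]]] := @dist_core R _ _ _ hne.
have := tr_sum (twelve_state C a) hEF.
rewrite hE hab hF -hab tw_trace => /eqP.
by rewrite -[X in _ == X]addr0 (inj_eq (addrI _)) oner_eq0.
Qed.

Lemma tw_dist : pairwise_distinguishable (@sep_effect C _) (@twelve_state C k).
Proof.
move=> a b hab; apply: (@dist_core R); apply/eqP => e; apply: hab; by rewrite e.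
Qed.

Lemma card_FT : #|FT| = (12 ^ k)%N.
Proof. by rewrite card_ffun !card_prod !card_ord card_bool. Qed.

Lemma tw_wins : wins_PD_perfectly (@sep_state C ('I_k * 'I_2)%type)
                    (@sep_effect C ('I_k * 'I_2)%type) (12 ^ k).
Proof.
pose f (e : 'I_(12 ^ k)) : FT := enum_val (cast_ord (esym card_FT) e).
have finj : injective f by move=> x y /enum_val_inj /cast_ord_inj.
have hex : forall a b : FT, exists EF : (op C (qbasis ('I_k * 'I_2)%type) * op C (qbasis ('I_k * 'I_2)%type))%type,
    a != b -> [/\ two_outcome_meas (@sep_effect C _) EF.1 EF.2,
       optr (opmul EF.1 (twelve_state C a)) = 1 & optr (opmul EF.2 (twelve_state C b)) = 1].
  move=> a b; have [<-|hne] := eqVneq a b.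
    exists (@opid C _, @opid C _) => h; exfalso; move: h; by apply/negP; rewrite negbK.
  by have [E [F H]] := @dist_core R _ _ _ hne; exists (E, F).
pose pk a b := proj1_sig (constructive_indefinite_description _ (hex a b)).
have pkP : forall a b, a != b -> [/\ two_outcome_meas (@sep_effect C _) (pk a b).1 (pk a b).2,
       optr (opmul (pk a b).1 (twelve_state C a)) = 1 & optr (opmul (pk a b).2 (twelve_state C b)) = 1].
  by move=> a b; rewrite /pk; case: constructive_indefinite_description.
exists (fun e => twelve_state C (f e)); split; first by move=> e; apply: tw_state.
exists (fun e e' : 'I_(12 ^ k) => if (e < e')%N then (pk (f e) (f e')).1 else (pk (f e') (f e)).2).
move=> e e' hne.
have hf : forall x y, x != y -> f x != f y by move=> x y; apply: contra => /eqP /finj ->.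
have [lt|ge] := ltnP e e'.
  rewrite ltnNge (ltnW lt) /=.
  by have [h1 h2 _] := pkP _ _ (hf _ _ hne); split.
have lt : (e' < e)%N by rewrite ltn_neqAle ge andbT; apply: contra hne => /eqP h; apply/eqP/val_inj.
rewrite lt.
have hne' : f e' != f e by apply: hf; rewrite eq_sym.
have [[h1 h2 h3] _ h5] := pkP _ _ hne'; split => //.
by split => // x y; rewrite addrC.
Qed.

Theorem theorem2_dev (hk : (0 < k)%N) :
  wins_PD_perfectly (@sep_state R[i] ('I_k * 'I_2)%type)
                    (@sep_effect R[i] ('I_k * 'I_2)%type) (12 ^ k)
  /\ injective (@twelve_state R[i] k)
  /\ (forall a, sep_state (@twelve_state R[i] k a))
  /\ pairwise_distinguishable (@sep_effect R[i] ('I_k * 'I_2)%type)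
                              (@twelve_state R[i] k)
  /\ (forall m : nat,
        wins_PD_perfectly (@density R[i] (qbasis 'I_m)) (@psd R[i] (qbasis 'I_m))
                          (12 ^ k) ->
        ((2 * k)%:Z + Num.ceil (k%:R * (ln (3 : R) / ln (2 : R))) <= m%:Z)%R).
Proof.
split; first exact: tw_wins.
split; first exact: tw_inj.
split; first exact: tw_state.
split; first exact: tw_dist.
by move=> m hw; apply: (@log_bound R); apply: quantum_bound hw.
Qed.

End Final.

Theorem theorem2 (R : realType) (k : nat) (hk : (0 < k)%N) :
  (* 2k SEP-bits suffice: (C^2 (x)_min C^2)^{(x)_min k} wins P_D^[12^k] perfectly *)
  wins_PD_perfectly (@sep_state R[i] ('I_k * 'I_2)%type)
                    (@sep_effect R[i] ('I_k * 'I_2)%type) (12 ^ k)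
  (* indeed the 12^k product states are distinct SEP states, pairwise
     distinguishable with SEP measurements *)
  /\ injective (@twelve_state R[i] k)
  /\ (forall a, sep_state (@twelve_state R[i] k a))
  /\ pairwise_distinguishable (@sep_effect R[i] ('I_k * 'I_2)%type)
                              (@twelve_state R[i] k)
  (* under quantum composition, perfect winning with m qubits requires
     m >= 2k + ceil(k log_2 3) *)
  /\ (forall m : nat,
        wins_PD_perfectly (@density R[i] (qbasis 'I_m)) (@psd R[i] (qbasis 'I_m))
                          (12 ^ k) ->
        ((2 * k)%:Z + Num.ceil (k%:R * (ln (3 : R) / ln (2 : R))) <= m%:Z)%R).
Proof. exact: (@theorem2_dev R k hk). Qed.
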